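(* Let $\mathcal{C}$ be an $(n,k,d)$ linear MDS code over a finite field $\mathbb{F}_q$ with $d \ge 3$. Then $$\rho(\mathcal{C}) \ge \left\lfloor \frac{1}{d-1}\binom{n}{d-2}\right\rfloor + 1.$$
   Context: An $(n,k,d)$ linear MDS code is a linear code over $\mathbb{F}_q$ of length $n$, dimension $k$ and minimum Hamming distance $d = n-k+1$. A parity-check matrix for $\mathcal{C}$ is any matrix (possibly with linearly dependent rows) whose rows span $\mathcal{C}^\perp$. For a parity-check matrix $H$, the stopping distance $s(H)$ is the largest integer such that for every set of $s(H)-1$ or fewer columns of $H$, the projection of $H$ onto those columns contains at least one row with exactly one nonzero entry. The stopping redundancy $\rho(\mathcal{C})$ is the smallest number of rows of a parity-check matrix $H$ for $\mathcal{C}$ with $s(H) = d$. *)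

(* Defs.v *)
From HB Require Import structures.
From mathcomp Require Import all_boot all_order all_algebra all_field.
Set Implicit Arguments. Unset Strict Implicit. Unset Printing Implicit Defensive.
Import GRing.Theory.
Local Open Scope ring_scope.

(* A linear code of length n over a finite field F is represented as the row
   space of a matrix G : 'M[F]_(m, n) (a generator matrix, rows possibly
   dependent). *)

Definition codeword (F : fieldType) (m n : nat) (G : 'M[F]_(m, n)) (v : 'rV[F]_n) : bool :=
  (v <= G)%MS.

Definition wt (F : fieldType) (n : nat) (v : 'rV[F]_n) : nat :=
  #|[set i : 'I_n | v 0 i != 0]|.

Definition min_distance (F : fieldType) (m n : nat) (G : 'M[F]_(m, n)) (d : nat) : Prop :=
  (exists2 v, codeword G v & (v != 0) && (wt v == d)) /\
  (forall v, codeword G v -> v != 0 -> (d <= wt v)%N).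

Definition MDS_code (F : fieldType) (m n : nat) (G : 'M[F]_(m, n)) (k d : nat) : Prop :=
  \rank G = k /\ min_distance G d /\ d = (n - k + 1)%N.

Definition in_dual (F : fieldType) (m n : nat) (G : 'M[F]_(m, n)) (v : 'rV[F]_n) : Prop :=
  forall c, codeword G c -> (c *m v^T) = 0.

Definition parity_check (F : fieldType) (m n r : nat) (G : 'M[F]_(m, n)) (H : 'M[F]_(r, n)) : Prop :=
  forall v : 'rV[F]_n, (v <= H)%MS <-> in_dual G v.

Definition row_single (F : fieldType) (r n : nat) (H : 'M[F]_(r, n)) (S : {set 'I_n}) (j : 'I_r) : bool :=
  #|[set i in S | H j i != 0]| == 1%N.

Definition covers_upto (F : fieldType) (r n : nat) (H : 'M[F]_(r, n)) (t : nat) : Prop :=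
  forall S : {set 'I_n}, S != set0 -> (#|S| <= t)%N -> exists j, row_single H S j.

Definition stopping_distance (F : fieldType) (r n : nat) (H : 'M[F]_(r, n)) (s : nat) : Prop :=
  covers_upto H s.-1 /\ ~ covers_upto H s.

(* Main.v *)
Require Import Defs.
From HB Require Import structures.
From mathcomp Require Import all_boot all_order all_algebra all_field.
From mathcomp Require Import zify.
Set Implicit Arguments. Unset Strict Implicit. Unset Printing Implicit Defensive.
Import GRing.Theory.
Local Open Scope ring_scope.

Lemma sum_bool_card (T : finType) (P : pred T) (b : T -> bool) :
  (\sum_(x | P x) (b x : nat) = #|[set x | P x && b x]|)%N.
Proof.
rewrite -sum1dep_card big_mkcondr /=; apply: eq_bigr => x _; by case: (b x).
Qed.

Lemma exists_vanish (F : fieldType) p n (V : 'M[F]_(p,n)) (X : {set 'I_n}) :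
  (#|X| < \rank V)%N ->
  exists c : 'rV[F]_n, [/\ (c <= V)%MS, c != 0 & forall i, i \in X -> c 0 i = 0].
Proof.
move=> hX.
pose S := \matrix_(i < n, j < #|X|) ((i == enum_val j)%:R : F).
have h1 := mxrank_mul_ker V S.
have h2 := rank_leq_col (V *m S).
set M := (V :&: kermx S)%MS in h1.
have Mn0 : M != 0 by rewrite -mxrank_eq0; lia.
case: (pickP (fun i => row i M != 0)) => [i Hi | H0]; last first.
  case/negP: Mn0; apply/eqP/row_matrixP => i; move/negbFE: (H0 i) => /eqP ->.
  by rewrite row0.
exists (row i M); split => //.
  exact: submx_trans (row_sub i M) (capmxSl _ _).
have : (row i M <= kermx S)%MS := submx_trans (row_sub i M) (capmxSr _ _).
rewrite sub_kermx => /eqP hk x xX.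
move/matrixP: hk => /(_ 0 (enum_rank_in xX x)).
rewrite /S !mxE (bigD1 x) //= big1 ?addr0.
  by rewrite !mxE enum_rankK_in // eqxx mulr1.
move=> y ny; rewrite !mxE enum_rankK_in //.
by rewrite (negbTE ny) mulr0.
Qed.

Lemma set_between (T : finType) (A B : {set T}) t :
  A \subset B -> (#|A| + t <= #|B|)%N ->
  exists X : {set T}, [/\ A \subset X, X \subset B & #|X| = #|A| + t]%N.
Proof.
move=> AB; elim: t => [|t IH] ht.
  by exists A; rewrite addn0.
have [X [AX XB cX]] : exists X : {set T}, [/\ A \subset X, X \subset B & #|X| = (#|A| + t)%N].
  by apply: IH; lia.
have : B :\: X != set0.
  rewrite setD_eq0; apply/negP => BX.
  have := subset_leq_card BX; lia.
case/set0Pn => x; rewrite inE => /andP [xX xB].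
exists (x |: X); split.
- exact: subset_trans AX (subsetUr _ _).
- by rewrite subUset sub1set xB XB.
- by rewrite cardsU1 xX cX addnS.
Qed.

Lemma row_nz_exists (F : fieldType) n (v : 'rV[F]_n) : v != 0 -> exists i, v 0 i != 0.
Proof.
move=> vn; case: (pickP (fun i => v 0 i != 0)) => [i Hi | H0]; first by exists i.
case/negP: vn; apply/eqP/rowP => i; rewrite mxE; by move/negbFE: (H0 i) => /eqP.
Qed.

Lemma dual_wt (F : fieldType) m n (G : 'M[F]_(m, n)) k d :
  MDS_code G k d -> forall v, in_dual G v -> v != 0 -> (k < wt v)%N.
Proof.
move=> [rk [[_ md] dE]] v dv vn.
rewrite ltnNge; apply/negP => hU.
set U := [set i | v 0 i != 0].
have wU : wt v = #|U| by [].
have [i0 vi0] := row_nz_exists vn.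
have i0U : i0 \in U by rewrite inE.
have kn : (k <= n)%N by rewrite -rk; exact: rank_leq_col.
have cU : #|U :\ i0| = (#|U|).-1 by rewrite (cardsD1 i0 U) i0U.
have AB : U :\ i0 \subset [set~ i0].
  by apply/subsetP => x; rewrite !inE => /andP [].
have U1 : (1 <= #|U|)%N by rewrite card_gt0; apply/set0Pn; exists i0.
have hUk : (#|U| <= k)%N by rewrite -wU.
have hb : (#|U :\ i0| + (k.-1 - #|U :\ i0|) <= #|[set~ i0]|)%N.
  rewrite cardsC1 card_ord cU -!subn1; lia.
have [X [AX XB cX]] := set_between AB hb.
have hX : (#|X| < \rank G)%N by rewrite rk cX cU -!subn1; lia.
have [c [cG cn cX0]] := exists_vanish hX.
have ci0 : c 0 i0 = 0.
  have := dv c cG; move/matrixP => /(_ 0 0); rewrite !mxE (bigD1 i0) //= big1 ?addr0.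
    by rewrite mxE => /eqP; rewrite mulf_eq0 (negbTE vi0) orbF => /eqP.
  move=> y ny; rewrite !mxE.
  case: (boolP (v 0 y == 0)) => [/eqP -> | vy]; first by rewrite mulr0.
  rewrite cX0 ?mul0r //; apply: (subsetP AX); by rewrite !inE ny.
have i0X : i0 \notin X by apply/negP => /(subsetP XB); rewrite !inE eqxx.
have wc : (wt c <= n - k)%N.
  have : [set i | c 0 i != 0] \subset ~: (i0 |: X).
    apply/subsetP => x; rewrite !inE; apply: contraNN => /orP [/eqP -> | xX].
      by rewrite ci0.
    by rewrite cX0.
  move/subset_leq_card; rewrite /wt.
  have := cardsC (i0 |: X); rewrite cardsU1 i0X card_ord cX cU -!subn1 /=; lia.
have := md c cG cn; lia.
Qed.

Ltac nlia := unfold reverse_coercion in *; lia.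
Ltac nnia := unfold reverse_coercion in *; nia.

Theorem theorem17 (F : finFieldType) (m n k d : nat) (G : 'M[F]_(m, n)) :
  MDS_code G k d -> (3 <= d)%N ->
  forall (r : nat) (H : 'M[F]_(r, n)),
    parity_check G H -> stopping_distance H d ->
    ('C(n, d - 2) %/ (d - 1) + 1 <= r)%N.
Proof.
move=> hM d3 r H pc [cov _].
have [rk [[[v0 cv0 /andP[v0n /eqP wv0]] md] dE]] := hM.
have dn : (d <= n)%N.
  by rewrite -wv0 /wt; have := max_card (mem [set i | v0 0 i != 0]); rewrite card_ord.
have kn : (k <= n)%N by rewrite -rk; exact: rank_leq_col.
pose Z (j : 'I_r) := [set i | H j i == 0].
have F1 : forall j i, H j i != 0 -> (#|Z j| <= d - 2)%N.
  move=> j i hji.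
  have dv : in_dual G (row j H) by apply/pc; exact: row_sub.
  have vn : row j H != 0.
    apply/negP => /eqP /matrixP /(_ 0 i); rewrite !mxE => /eqP; exact/negP.
  have := dual_wt hM dv vn.
  have -> : wt (row j H) = #|~: Z j|.
    by rewrite /wt; apply: eq_card => x; rewrite !inE mxE.
  have := cardsC (Z j); rewrite card_ord; nlia.
have F2 : forall S j, row_single H S j = (#|S :\: Z j| == 1%N).
  move=> S j; rewrite /row_single; congr (_ == _); apply: eq_card => x.
  by rewrite !inE andbC.
have B : forall (j : 'I_r) (S : {set 'I_n}), #|S| = (d - 1)%N -> row_single H S j ->
    #|Z j| = (d - 2)%N /\ exists2 x, x \notin Z j & S = x |: Z j.
  move=> j S cS; rewrite F2 => /cards1P [x Sx].
  have xS : x \in S :\: Z j by rewrite Sx set11.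
  move: (xS); rewrite inE => /andP [xZ xS'].
  have hx : H j x != 0 by move: xZ; rewrite inE.
  have hZ := F1 _ _ hx.
  have hI := cardsID (Z j) S.
  rewrite Sx cards1 cS in hI.
  have SZ : S :&: Z j = Z j.
    have h3 : (#|S :&: Z j| = d - 2)%N by nlia.
    have hh : (#|Z j| <= #|S :&: Z j|)%N by nlia.
    by apply/eqP; rewrite eqEcard subsetIr /=.
  split; first by rewrite -SZ; nlia.
  exists x => //.
  by rewrite -{1}(setID S (Z j)) SZ Sx setUC.
pose cv (j : 'I_r) := [set S : {set 'I_n} | (#|S| == (d - 1)%N) && row_single H S j].
have Cb : forall j, (#|cv j| <= (#|Z j| == (d - 2)%N) * (n - (d - 2)))%N.
  move=> j; case: (boolP (#|Z j| == (d - 2)%N)) => hz /=.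
  - rewrite mul1n.
    have : cv j \subset [set x |: Z j | x in ~: Z j].
      apply/subsetP => S; rewrite inE => /andP [/eqP cS rs].
      have [_ [x xZ ->]] := B j S cS rs.
      by apply/imsetP; exists x => //; rewrite inE.
    move/subset_leq_card => h; apply: leq_trans h _.
    apply: leq_trans (leq_imset_card _ _) _.
    have := cardsC (Z j); rewrite card_ord; move/eqP: hz; nlia.
  - rewrite mul0n leqn0 cards_eq0; apply/eqP/setP => S; rewrite inE in_set0.
    apply/negP => /andP [/eqP cS rs]; have [hz' _] := B j S cS rs.
    by rewrite hz' eqxx in hz.
have Cb' : forall j, (#|cv j| <= n - (d - 2))%N.
  move=> j; apply: leq_trans (Cb j) _; by case: (_ == _); rewrite ?mul1n ?mul0n.
have Ncard : (\sum_(S : {set 'I_n} | #|S| == (d - 1)%N) 1 = 'C(n, d - 1))%N.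
  by rewrite sum1dep_card card_draws card_ord.
have c1 : forall S : {set 'I_n}, #|S| == (d - 1)%N ->
    (1 <= \sum_(j < r) (row_single H S j : nat))%N.
  move=> S /eqP cS.
  have Sn : S != set0 by rewrite -card_gt0 cS; nlia.
  have cS' : (#|S| <= d.-1)%N by rewrite cS subn1.
  have [j rj] := cov S Sn cS'.
  by rewrite (bigD1 j) //= rj.
have exch : (\sum_(S : {set 'I_n} | #|S| == (d - 1)%N) \sum_(j < r) (row_single H S j : nat)
    = \sum_(j < r) #|cv j|)%N.
  by rewrite exchange_big; apply: eq_bigr => j _; rewrite sum_bool_card.
have [S0 PS0] : exists S : {set 'I_n}, #|S| == (d - 1)%N.
  have : (0 < #|[set S : {set 'I_n} | #|S| == (d - 1)%N]|)%N.
    by rewrite card_draws card_ord bin_gt0; nlia.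
  by rewrite card_gt0 => /set0Pn [S]; rewrite inE => hS; exists S.
have [j0 rj0] : exists j, row_single H S0 j.
  apply: cov.
    by rewrite -card_gt0 (eqP PS0); nlia.
  by rewrite (eqP PS0) subn1.
have [Zj0 _] := B j0 S0 (eqP PS0) rj0.
have [h rh] : exists j, row_single H (Z j0) j.
  apply: cov.
    by rewrite -card_gt0 Zj0; nlia.
  by rewrite Zj0 -subn1; nlia.
have rh' := rh; rewrite F2 in rh'.
have [x hx] := cards1P rh'.
have xin : x \in Z j0 :\: Z h by rewrite hx set11.
move: xin; rewrite inE => /andP [xZh xZj0].
have hhx : H h x != 0 by move: xZh; rewrite inE.
have Zh := F1 _ _ hhx.
have hne : h != j0.
  apply/negP => /eqP ehj; move: rh'; by rewrite ehj setDv cards0.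
have hI := cardsID (Z h) (Z j0).
rewrite (eqP rh') Zj0 in hI.
have key : ('C(n, d - 1) < r * (n - (d - 2)))%N.
  rewrite -Ncard.
  have -> : (r * (n - (d - 2)) = \sum_(j < r) (n - (d - 2)))%N.
    by rewrite sum_nat_const card_ord.
  case: (boolP (#|Z h| == (d - 2)%N)) => hz.
  - pose St := Z j0 :|: Z h.
    have cSt : #|St| = (d - 1)%N.
      have := cardsUI (Z j0) (Z h); rewrite /St Zj0 (eqP hz). move: hI. nlia.
    have r1 : row_single H St j0.
      rewrite F2 /St setDUl setDv set0U.
      have := cardsID (Z j0) (Z h); rewrite setIC (eqP hz); nlia.
    have r2 : row_single H St h.
      by rewrite F2 /St setDUl setDv setU0.
    have c2 : (2 <= \sum_(j < r) (row_single H St j : nat))%N.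
      rewrite (bigD1 j0) //= (bigD1 h) //= r1 r2; nlia.
    apply: (@leq_trans (\sum_(j < r) #|cv j|)); last by apply: leq_sum => j _; exact: Cb' j.
    rewrite -exch.
    rewrite (bigD1 St) ?cSt ?eqxx //= [X in (_ < X)%N](bigD1 St) ?cSt ?eqxx //=.
    rewrite -addSn; apply: leq_add => //.
    by apply: leq_sum => S /andP [PS _]; exact: c1.
  - have ch : #|cv h| = 0%N.
      by apply/eqP; rewrite -leqn0; have := Cb h; rewrite (negbTE hz) mul0n.
    have pos : (0 < n - (d - 2))%N by nlia.
    apply: (@leq_ltn_trans (\sum_(j < r) #|cv j|)).
      rewrite -exch; apply: leq_sum => S PS; exact: c1.
    rewrite (bigD1 h) //= [X in (_ < X)%N](bigD1 h) //= ch.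
    rewrite add0n -add1n; apply: leq_add => //.
    by apply: leq_sum => j _; exact: Cb' j.
have hb := mul_bin_left n (d - 2).
have e : (d - 2).+1 = (d - 1)%N by nlia.
rewrite e in hb.
rewrite addn1 ltn_divLR; last by nlia.
have mpos : (0 < n - (d - 2))%N by nlia.
rewrite -(ltn_pmul2l mpos) -hb.
have epos : (0 < d - 1)%N by nlia.
rewrite -(ltn_pmul2l epos) in key.
apply: (leq_trans key); nnia.
Qed.
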